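(* Let $N\ge1$, $0\le R_+\le N$, and let $u(\vec k),v(\vec k)$ be complex $R_+\times N$ matrices (defined for all $\vec k$ in the Brillouin zone) satisfying $$u(\vec k)u^\dagger(\vec k)-v(\vec k)v^\dagger(\vec k)=\mathbb{1}_{R_+},\qquad u(\vec k)v^T(-\vec k)-v(\vec k)u^T(-\vec k)=0.$$ Consider the bosonic Hamiltonian $H=\sum_{\vec k}\sum_{m=1}^{R_+}A^\dagger_{m,\vec k}A_{m,\vec k}$ with $A_{m,\vec k}=\sum_{n=1}^N(u_{mn}(\vec k)b_{n,\vec k}+v_{mn}(\vec k)b^\dagger_{n,-\vec k})$, and write it (up to an additive constant) as $H=\frac12\sum_{\vec k}\phi_{\vec k}^\dagger h(\vec k)\phi_{\vec k}$ with Hermitian BdG matrix $h(\vec k)$. Let $Q(\vec k)=u^\dagger(\vec k)u(\vec k)$ and let $\tilde h(\vec k)=\mathrm{diag}\big(Q(\vec k),\,Q(-\vec k)^T\big)$ be the BdG matrix of the number-conserving Hamiltonian $\tilde H=\sum_{\vec k}\sum_{m,n}Q_{mn}(\vec k)b^\dagger_{m,\vec k}b_{n,\vec k}$. Then for every $\vec k$, $$\tilde h=\tfrac14\big(h+\tau_z h\tau_z+\tau_z h\tau_z h+h\tau_z h\tau_z\big),$$ where $h=h(\vec k)$ and $\tilde h=\tilde h(\vec k)$.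
   Context: $b_{n,\vec k}$ ($n=1,\dots,N$) are bosonic annihilation operators on sublattice $n$ at momentum $\vec k$ of a lattice with $N$ sites per unit cell and periodic boundary conditions. The Nambu vector is $\phi_{\vec k}=(b_{1,\vec k},\dots,b_{N,\vec k},b^\dagger_{1,-\vec k},\dots,b^\dagger_{N,-\vec k})^T$ and $\tau_z=\mathrm{diag}(\mathbb{1}_N,-\mathbb{1}_N)$. This is the positive-definite (band-flattened) case, in which all modes above the gap are particle-like. *)

(* Defs.v *)
(* Complex scalars: any numClosedFieldType C (e.g. algC, R[i]). *)
From HB Require Import structures.
From mathcomp Require Import all_boot all_order all_algebra.
Set Implicit Arguments. Unset Strict Implicit. Unset Printing Implicit Defensive.
Import Order.TTheory GRing.Theory Num.Theory.
Local Open Scope ring_scope.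

Definition adjmx (C : numClosedFieldType) (m n : nat) (A : 'M[C]_(m, n)) : 'M[C]_(n, m) :=
  (map_mx (fun z : C => z^*) A)^T.

Definition tauz (C : numClosedFieldType) (N : nat) : 'M[C]_(N + N) :=
  block_mx 1%:M 0 0 (- 1%:M).
Definition taux (C : numClosedFieldType) (N : nat) : 'M[C]_(N + N) :=
  block_mx 0 1%:M 1%:M 0.

(* Momenta: an abelian group K (Brillouin zone of the periodic lattice), -k is negation.
   u, v : K -> complex R_+ x N matrices. *)

(* Coefficient matrix of sum_m A^dag_{m,k} A_{m,k} written as phi_k^dag M(k) phi_k,
   phi_k = (b_k, b^dag_{-k}). *)
Definition Mcoef (C : numClosedFieldType) (K : zmodType) (r N : nat)
  (u v : K -> 'M[C]_(r, N)) (k : K) : 'M[C]_(N + N) :=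
  block_mx (adjmx (u k) *m u k) (adjmx (u k) *m v k)
           (adjmx (v k) *m u k) (adjmx (v k) *m v k).

(* Hermitian BdG matrix: H = sum_k phi^dag M(k) phi = 1/2 sum_k phi^dag h(k) phi + const,
   using phi_{-k} = tau_x (phi_k^dag)^T, so h(k) = M(k) + tau_x M(-k)^T tau_x. *)
Definition hBdG (C : numClosedFieldType) (K : zmodType) (r N : nat)
  (u v : K -> 'M[C]_(r, N)) (k : K) : 'M[C]_(N + N) :=
  Mcoef u v k + taux C N *m (Mcoef u v (- k))^T *m taux C N.

Definition Qmat (C : numClosedFieldType) (K : zmodType) (r N : nat)
  (u : K -> 'M[C]_(r, N)) (k : K) : 'M[C]_N := adjmx (u k) *m u k.

Definition htilde (C : numClosedFieldType) (K : zmodType) (r N : nat)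
  (u : K -> 'M[C]_(r, N)) (k : K) : 'M[C]_(N + N) :=
  block_mx (Qmat u k) 0 0 (Qmat u (- k))^T.

(* Main.v *)
Require Import Defs.
From HB Require Import structures.
From mathcomp Require Import all_boot all_order all_algebra.
Import Order.TTheory GRing.Theory Num.Theory.
Local Open Scope ring_scope.

Section L.
Variables (C : numClosedFieldType) (V : lmodType C).
Lemma four_sc (a : V) : 4^-1 *: (a + a + (a + a)) = a.
Proof.
have -> : a + a + (a + a) = (4%:R : C) *: a.
  by rewrite scaler_nat !mulrS mulr0n addr0 !addrA.
by rewrite scalerA mulVf ?scale1r // pnatr_eq0.
Qed.
Lemma L1 (a b : V) : 4^-1 *: (a+b + (a+b) + (a-b) + (a-b)) = a.
Proof.
rewrite -addrA addrACA.
have -> : a + b + (a - b) = a + a by rewrite addrACA subrr addr0.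
exact: four_sc.
Qed.
Lemma L2 (a b : V) : 4^-1 *: (a+b - (a+b) + (a-b) - (a-b)) = 0.
Proof. by rewrite subrr add0r subrr scaler0. Qed.
Lemma L3 (a b : V) : 4^-1 *: (a+b - (a+b) + (-a - -b) + (a-b)) = 0.
Proof. by rewrite subrr add0r opprK addrACA addNr subrr addr0 scaler0. Qed.
Lemma L4 (a b : V) : 4^-1 *: (a+b - -(a+b) + (-a - -b) - (a-b)) = b.
Proof.
rewrite !opprK opprB -addrA [- a + b]addrC addrACA.
have -> : a + b + (b - a) = b + b by rewrite [a + b]addrC addrACA subrr addr0.
exact: four_sc.
Qed.
End L.
Section S.
Variable C : numClosedFieldType.
Definition cj (m n : nat) (A : 'M[C]_(m, n)) := map_mx (fun z : C => z^*) A.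

Arguments cj {m n}.
Lemma cj_mul m n p (A : 'M[C]_(m, n)) (B : 'M[C]_(n, p)) : cj (A *m B) = cj A *m cj B.
Proof. exact: (map_mxM Num.conj_op). Qed.
Lemma cjB m n (A B : 'M[C]_(m, n)) : cj (A - B) = cj A - cj B.
Proof. exact: (map_mxB Num.conj_op). Qed.
Lemma cj0 m n : cj (0 : 'M[C]_(m, n)) = 0.
Proof. exact: (map_mx0 Num.conj_op). Qed.
Lemma cjN1 n : cj (- 1%:M : 'M[C]_n) = - 1%:M.
Proof. by apply/matrixP=> i j; rewrite !mxE rmorphN rmorphMn rmorph1. Qed.
Lemma adj_block m1 m2 n1 n2 (a : 'M[C]_(m1,n1)) (b : 'M[C]_(m1,n2)) (c : 'M[C]_(m2,n1)) (d : 'M[C]_(m2,n2)) :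
  adjmx (block_mx a b c d) = block_mx (adjmx a) (adjmx c) (adjmx b) (adjmx d).
Proof. by rewrite /adjmx map_block_mx tr_block_mx. Qed.
Lemma adj_cj m n (A : 'M[C]_(m, n)) : adjmx (cj A) = A^T.
Proof. by apply/matrixP=> i j; rewrite !mxE conjCK. Qed.
Lemma tr_adj m n (A : 'M[C]_(m, n)) : (adjmx A)^T = cj A.
Proof. by rewrite /adjmx trmxK. Qed.
Lemma adj_mul m n p (A : 'M[C]_(m, n)) (B : 'M[C]_(n, p)) : adjmx (A *m B) = adjmx B *m adjmx A.
Proof. by rewrite /adjmx -/(cj _) cj_mul trmx_mul. Qed.
Lemma cj_tr m n (A : 'M[C]_(m, n)) : cj A^T = (cj A)^T.
Proof. by rewrite /cj map_trmx. Qed.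
Lemma hW (K : zmodType) (r N : nat) (u v : K -> 'M[C]_(r, N)) k :
  hBdG u v k = adjmx (block_mx (u k) (v k) (cj (v (-k))) (cj (u (-k)))) *m
               block_mx (u k) (v k) (cj (v (-k))) (cj (u (-k))).
Proof.
rewrite /hBdG /Mcoef /taux tr_block_mx !mulmx_block adj_block !adj_cj.
rewrite !mul0mx !mul1mx !mulmx0 !mulmx1 !add0r !addr0 add_block_mx !trmx_mul !tr_adj.
by rewrite mulmx_block.
Qed.
Lemma cj_adj m n (A : 'M[C]_(m, n)) : cj (adjmx A) = A^T.
Proof. by apply/matrixP=> i j; rewrite !mxE conjCK. Qed.
Lemma WtzW (K : zmodType) (r N : nat) (u v : K -> 'M[C]_(r, N))
  (hnorm : forall k : K, u k *m adjmx (u k) - v k *m adjmx (v k) = 1%:M)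
  (hcomm : forall k : K, u k *m (v (- k))^T - v k *m (u (- k))^T = 0) k :
  block_mx (u k) (v k) (cj (v (-k))) (cj (u (-k))) *m tauz C N *m
  adjmx (block_mx (u k) (v k) (cj (v (-k))) (cj (u (-k)))) = tauz C r.
Proof.
rewrite /tauz !mulmx_block adj_block !adj_cj.
rewrite ?mul0mx ?mulmx1 ?mulmx0 ?add0r ?addr0 ?mulmxN ?mulNmx mulmx_block ?mulmx1 ?mulNmx ?mulmxN.
rewrite hnorm hcomm.
have e1 : cj (v (-k)) *m adjmx (u k) - cj (u (-k)) *m adjmx (v k) = 0.
  rewrite /adjmx -!cj_tr -!cj_mul -cjB.
  have := hcomm (-k); rewrite opprK => H.
  by rewrite -opprB H oppr0 cj0.
have e2 : cj (v (-k)) *m (v (-k))^T - cj (u (-k)) *m (u (-k))^T = - 1%:M.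
  rewrite -(@cj_adj _ _ (v (-k))) -(@cj_adj _ _ (u (-k))) -!cj_mul -cjB.
  by rewrite -opprB hnorm cjN1.
by rewrite e1 e2.
Qed.
End S.
Theorem mainTheorem3 (C : numClosedFieldType) (K : zmodType) (N r : nat)
  (hN : (1 <= N)%N) (hr : (r <= N)%N)
  (u v : K -> 'M[C]_(r, N))
  (hnorm : forall k : K, u k *m adjmx (u k) - v k *m adjmx (v k) = 1%:M)
  (hcomm : forall k : K, u k *m (v (- k))^T - v k *m (u (- k))^T = 0)
  (k : K) :
  let h := hBdG u v k in
  let tz := tauz C N in
  htilde u k =
    4^-1 *: (h + tz *m h *m tz + tz *m h *m tz *m h + h *m tz *m h *m tz).
Proof.
move=> h tz; rewrite /h hW.
set W := block_mx _ _ _ _.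
have E1 : tz *m (adjmx W *m W) *m tz *m (adjmx W *m W) = tz *m adjmx W *m tauz C r *m W.
  by rewrite -(@WtzW C _ _ _ _ _ hnorm hcomm k) -/W !mulmxA.
have E2 : (adjmx W *m W) *m tz *m (adjmx W *m W) *m tz = adjmx W *m tauz C r *m W *m tz.
  by rewrite -(@WtzW C _ _ _ _ _ hnorm hcomm k) -/W !mulmxA.
rewrite E1 E2 /W /htilde /Qmat /tz /tauz adj_block !adj_cj !mulmx_block.
rewrite ?mul0mx ?mulmx1 ?mulmx0 ?add0r ?addr0 ?mulmxN ?mulNmx ?mul1mx.
rewrite ?mulmx_block ?mul0mx ?mulmx1 ?mulmx0 ?add0r ?addr0 ?mulmxN ?mulNmx ?mul1mx.
rewrite !add_block_mx scale_block_mx.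
rewrite trmx_mul tr_adj.
congr block_mx.
- by rewrite L1.
- by rewrite L2.
- by rewrite L3.
- by rewrite L4.
Qed.
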